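(* Let $\Lambda,\mu,\beta,\rho,\phi,\alpha,\omega>0$, $0<\eta_C\le 1$, $\eta_A\ge 1$, and set $\beta_1=\beta\mu/\Lambda$, $\xi_1=\alpha+\mu$, $\xi_2=\omega+\mu$, $\xi_3=\rho+\phi+\mu$. Consider the system \begin{align*} \dot S&=\Lambda-\beta_1(I+\eta_C C+\eta_A A)S-\mu S,\\ \dot I&=\beta_1(I+\eta_C C+\eta_A A)S-\xi_3 I+\alpha A+\omega C,\\ \dot C&=\phi I-\xi_2 C,\\ \dot A&=\rho I-\xi_1 A, \end{align*} on the region $\Omega=\{(S,I,C,A)\in\mathbb{R}_+^4: S+I+C+A\le \Lambda/\mu\}$, and let $\Omega_0=\{(S,I,C,A)\in\Omega: I=C=A=0\}$. Define $$\tilde R_0=\frac{\beta\,\bigl(\xi_2(\xi_1+\rho\eta_A)+\eta_C\phi\xi_1\bigr)}{\mu\,\bigl(\xi_2(\rho+\xi_1)+\phi\xi_1\bigr)}.$$ If $\tilde R_0>1$, then the endemic equilibrium $\tilde\Sigma_+=(S^*,I^*,C^*,A^* )$ of this system, given by $$S^*=\frac{\Lambda}{\mu\tilde R_0},\quad I^*=\frac{\Lambda\xi_1\xi_2(1-1/\tilde R_0)}{\mathcal D},\quad C^*=\frac{\Lambda\phi\xi_1(1-1/\tilde R_0)}{\mathcal D},\quad A^*=\frac{\Lambda\rho\xi_2(1-1/\tilde R_0)}{\mathcal D},$$ with $\mathcal D=\mu(\xi_2(\rho+\xi_1)+\phi\xi_1)$, is globally asymptotically stable in $\Omega\setminus\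Omega_0$.
   Context: This is the limiting (mass-action) form of an HIV/AIDS model with susceptible ($S$), pre-AIDS HIV-infected ($I$), HIV-infected under antiretroviral treatment ($C$) and AIDS ($A$) classes, with zero AIDS-induced death rate and total population fixed at $\Lambda/\mu$. $\tilde R_0$ is the basic reproduction number of this model; $\tilde\Sigma_+$ is its unique equilibrium with $I,C,A>0$ when $\tilde R_0>1$. *)

(* Defs.v *)
From Stdlib Require Import Reals.
From Coquelicot Require Import Coquelicot.
Open Scope R_scope.

Definition beta1 (Lam mu beta : R) : R := beta * mu / Lam.
Definition xi1 (mu alpha : R) : R := alpha + mu.
Definition xi2 (mu omega : R) : R := omega + mu.
Definition xi3 (mu rho phi : R) : R := rho + phi + mu.

Definition R0t (mu beta rho phi alpha omega etaC etaA : R) : R :=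
  beta * (xi2 mu omega * (xi1 mu alpha + rho * etaA) + etaC * phi * xi1 mu alpha)
  / (mu * (xi2 mu omega * (rho + xi1 mu alpha) + phi * xi1 mu alpha)).

Definition Dden (mu rho phi alpha omega : R) : R :=
  mu * (xi2 mu omega * (rho + xi1 mu alpha) + phi * xi1 mu alpha).

Definition Sstar (Lam mu beta rho phi alpha omega etaC etaA : R) : R :=
  Lam / (mu * R0t mu beta rho phi alpha omega etaC etaA).
Definition Istar (Lam mu beta rho phi alpha omega etaC etaA : R) : R :=
  Lam * xi1 mu alpha * xi2 mu omega * (1 - 1 / R0t mu beta rho phi alpha omega etaC etaA)
  / Dden mu rho phi alpha omega.
Definition Cstar (Lam mu beta rho phi alpha omega etaC etaA : R) : R :=
  Lam * phi * xi1 mu alpha * (1 - 1 / R0t mu beta rho phi alpha omega etaC etaA)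
  / Dden mu rho phi alpha omega.
Definition Astar (Lam mu beta rho phi alpha omega etaC etaA : R) : R :=
  Lam * rho * xi2 mu omega * (1 - 1 / R0t mu beta rho phi alpha omega etaC etaA)
  / Dden mu rho phi alpha omega.

Definition fS (Lam mu beta etaC etaA : R) (s i c a : R) : R :=
  Lam - beta1 Lam mu beta * (i + etaC * c + etaA * a) * s - mu * s.
Definition fI (Lam mu beta rho phi alpha omega etaC etaA : R) (s i c a : R) : R :=
  beta1 Lam mu beta * (i + etaC * c + etaA * a) * s - xi3 mu rho phi * i
  + alpha * a + omega * c.
Definition fC (mu phi omega : R) (i c : R) : R := phi * i - xi2 mu omega * c.
Definition fA (mu rho alpha : R) (i a : R) : R := rho * i - xi1 mu alpha * a.

Definition is_solution (Lam mu beta rho phi alpha omega etaC etaA : R)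
    (S I C A : R -> R) : Prop :=
  (forall t, 0 < t ->
     is_derive S t (fS Lam mu beta etaC etaA (S t) (I t) (C t) (A t)) /\
     is_derive I t (fI Lam mu beta rho phi alpha omega etaC etaA (S t) (I t) (C t) (A t)) /\
     is_derive C t (fC mu phi omega (I t) (C t)) /\
     is_derive A t (fA mu rho alpha (I t) (A t))) /\
  filterlim S (at_right 0) (locally (S 0)) /\
  filterlim I (at_right 0) (locally (I 0)) /\
  filterlim C (at_right 0) (locally (C 0)) /\
  filterlim A (at_right 0) (locally (A 0)).

Definition in_Omega (Lam mu : R) (s i c a : R) : Prop :=
  0 <= s /\ 0 <= i /\ 0 <= c /\ 0 <= a /\ s + i + c + a <= Lam / mu.
Definition in_Omega0 (Lam mu : R) (s i c a : R) : Prop :=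
  in_Omega Lam mu s i c a /\ i = 0 /\ c = 0 /\ a = 0.

Definition dist4 (s i c a s' i' c' a' : R) : R :=
  sqrt ((s - s')^2 + (i - i')^2 + (c - c')^2 + (a - a')^2).

(* Main.v *)
Require Import Defs.
From Stdlib Require Import Reals Lra Psatz Classical.
From Coquelicot Require Import Coquelicot.
Open Scope R_scope.

Lemma ball_R (x e y : R) : ball x e y <-> Rabs (y - x) < e.
Proof. unfold ball; simpl; unfold AbsRing_ball, abs, minus, plus, opp; simpl. tauto. Qed.

Lemma cont_of_der (f : R -> R) (x l : R) : is_derive f x l -> continuity_pt f x.
Proof. intro H. apply continuity_pt_filterlim. apply (@ex_derive_continuous R_AbsRing R_NormedModule f x). exists l; exact H. Qed.

Lemma contf_of_der (f : R -> R) (x l : R) : is_derive f x l -> filterlim f (locally x) (locally (f x)).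
Proof. intro H. apply (@ex_derive_continuous R_AbsRing R_NormedModule f x). exists l; exact H. Qed.

Lemma mvt (f df : R -> R) (a b : R) : a < b -> (forall x, a <= x <= b -> is_derive f x (df x)) ->
  exists c, a <= c <= b /\ f b - f a = df c * (b - a).
Proof.
  intros Hab Hd.
  destruct (MVT_gen f a b df) as [c [Hc Hfc]].
  - intros x Hx. apply Hd. rewrite Rmin_left in Hx by lra. rewrite Rmax_right in Hx by lra. lra.
  - intros x Hx. rewrite Rmin_left in Hx by lra. rewrite Rmax_right in Hx by lra.
    apply cont_of_der with (df x). apply Hd; lra.
  - exists c. rewrite Rmin_left in Hc by lra. rewrite Rmax_right in Hc by lra. split; auto.
Qed.

Lemma mvt_le (f df : R -> R) (a b : R) : a <= b -> (forall x, a <= x <= b -> is_derive f x (df x)) ->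
  (forall x, a <= x <= b -> 0 <= df x) -> f a <= f b.
Proof.
  intros Hab Hd Hp. destruct (Rle_lt_or_eq_dec a b Hab) as [H|H].
  - destruct (mvt f df a b H Hd) as [c [Hc E]]. specialize (Hp c Hc). nra.
  - subst; lra.
Qed.

Lemma mvt_lt (f df : R -> R) (a b : R) : a < b -> (forall x, a <= x <= b -> is_derive f x (df x)) ->
  (forall x, a <= x <= b -> 0 < df x) -> f a < f b.
Proof.
  intros Hab Hd Hp. destruct (mvt f df a b Hab Hd) as [c [Hc E]]. specialize (Hp c Hc). nra.
Qed.

Lemma mvt_lip (f df : R -> R) (a b K : R) : a <= b -> (forall x, a <= x <= b -> is_derive f x (df x)) ->
  (forall x, a <= x <= b -> Rabs (df x) <= K) -> Rabs (f b - f a) <= K * (b - a).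
Proof.
  intros Hab Hd Hp. destruct (Rle_lt_or_eq_dec a b Hab) as [H|H].
  - destruct (mvt f df a b H Hd) as [c [Hc E]]. specialize (Hp c Hc). rewrite E.
    rewrite Rabs_mult, (Rabs_right (b - a)) by lra. apply Rmult_le_compat_r; lra.
  - subst. replace (f b - f b) with 0 by ring. rewrite Rabs_R0; lra.
Qed.

Lemma rc_eps (f : R -> R) (l : R) : filterlim f (at_right 0) (locally l) ->
  forall eps, 0 < eps -> exists d, 0 < d /\ forall t, 0 < t < d -> Rabs (f t - l) < eps.
Proof.
  intros H eps He.
  destruct (proj1 (filterlim_locally f l) H (mkposreal eps He)) as [d Hd].
  exists d. split; [apply cond_pos|]. intros t Ht.
  assert (B: ball 0 d t) by (apply ball_R; rewrite Rminus_0_r, Rabs_right; lra).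
  specialize (Hd t B ltac:(lra)). apply ball_R in Hd. simpl in Hd. exact Hd.
Qed.

Lemma cont_eps (f : R -> R) (x : R) : filterlim f (locally x) (locally (f x)) ->
  forall eps, 0 < eps -> exists d, 0 < d /\ forall y, Rabs (y - x) < d -> Rabs (f y - f x) < eps.
Proof.
  intros H eps He.
  destruct (proj1 (filterlim_locally f (f x)) H (mkposreal eps He)) as [d Hd].
  exists d. split; [apply cond_pos|]. intros t Ht.
  assert (B: ball x d t) by (apply ball_R; exact Ht).
  specialize (Hd t B). apply ball_R in Hd. exact Hd.
Qed.

Lemma rc_plus (f g : R -> R) (a b : R) : filterlim f (at_right 0) (locally a) -> filterlim g (at_right 0) (locally b) ->
  filterlim (fun t => f t + g t) (at_right 0) (locally (a + b)).
Proof. intros Hf Hg. eapply filterlim_comp_2; [exact Hf|exact Hg|]. apply (filterlim_plus a b). Qed.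

Lemma rc_mult (f g : R -> R) (a b : R) : filterlim f (at_right 0) (locally a) -> filterlim g (at_right 0) (locally b) ->
  filterlim (fun t => f t * g t) (at_right 0) (locally (a * b)).
Proof. intros Hf Hg. eapply filterlim_comp_2; [exact Hf|exact Hg|]. apply (filterlim_mult a b). Qed.

Lemma rc_const (a : R) : filterlim (fun _ => a) (at_right 0) (locally a).
Proof. apply filterlim_const. Qed.

Lemma rc_comp (f g : R -> R) (a : R) : filterlim f (at_right 0) (locally a) -> filterlim g (locally a) (locally (g a)) ->
  filterlim (fun t => g (f t)) (at_right 0) (locally (g a)).
Proof. intros Hf Hg. eapply filterlim_comp; eauto. Qed.

Lemma rc_id : filterlim (fun t => t) (at_right 0) (locally 0).
Proof.
  apply filterlim_locally. intros eps. exists eps. intros y Hy _. exact Hy.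
Qed.

Lemma mono0 (f : R -> R) : filterlim f (at_right 0) (locally (f 0)) ->
  (forall a b, 0 < a -> a < b -> f a <= f b) -> forall t, 0 < t -> f 0 <= f t.
Proof.
  intros Hc Hm t Ht. destruct (Rle_or_lt (f 0) (f t)) as [H|H]; auto.
  destruct (rc_eps f (f 0) Hc (f 0 - f t) ltac:(lra)) as [d [Hd Hd']].
  set (s := Rmin t d / 2).
  assert (0 < s < d) by (unfold s; generalize (Rmin_l t d) (Rmin_r t d) (Rmin_glb_lt t d 0 Ht Hd); lra).
  assert (s < t) by (unfold s; generalize (Rmin_l t d) (Rmin_glb_lt t d 0 Ht Hd); lra).
  specialize (Hd' s H0). specialize (Hm s t ltac:(lra) H1).
  apply Rabs_lt_between in Hd'. lra.
Qed.

Lemma mono0d (f : R -> R) d : filterlim f (at_right 0) (locally (f 0)) ->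
  (forall a b, 0 < a -> a < b -> b < d -> f a <= f b) -> forall t, 0 < t -> t < d -> f 0 <= f t.
Proof.
  intros Hc Hm t Ht Htd. destruct (Rle_or_lt (f 0) (f t)) as [H|H]; auto.
  destruct (rc_eps f (f 0) Hc (f 0 - f t) ltac:(lra)) as [e [He He']].
  set (s := Rmin t e / 2).
  assert (0 < s < e) by (unfold s; generalize (Rmin_l t e) (Rmin_r t e) (Rmin_glb_lt t e 0 Ht He); lra).
  assert (s < t) by (unfold s; generalize (Rmin_l t e) (Rmin_glb_lt t e 0 Ht He); lra).
  specialize (He' s H0). specialize (Hm s t ltac:(lra) H1 Htd).
  apply Rabs_lt_between in He'. lra.
Qed.

Lemma rc_minus (f g : R -> R) (a b : R) : filterlim f (at_right 0) (locally a) -> filterlim g (at_right 0) (locally b) ->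
  filterlim (fun t => f t - g t) (at_right 0) (locally (a - b)).
Proof.
  intros Hf Hg. replace (a - b) with (a + -1 * b) by ring.
  apply (filterlim_ext (fun t => f t + -1 * g t)); [intro; ring|].
  apply rc_plus; auto. apply rc_mult; auto. apply rc_const.
Qed.

Lemma deriv_left_lt (f : R -> R) (x l : R) : is_derive f x l -> 0 < l ->
  exists d, 0 < d /\ forall y, x - d < y < x -> f y < f x.
Proof.
  intros H Hl. apply is_derive_Reals in H.
  destruct (H l Hl) as [d Hd]. exists d. split; [apply cond_pos|].
  intros y Hy. specialize (Hd (y - x) ltac:(lra)).
  rewrite Rabs_left in Hd by lra. specialize (Hd ltac:(lra)).
  replace (x + (y - x)) with y in Hd by ring.
  apply Rabs_lt_between in Hd. destruct Hd as [Hd _].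
  assert (0 < (f y - f x) / (y - x)) by lra.
  assert (0 < (f y - f x) / (y - x) * (x - y)) by (apply Rmult_lt_0_compat; lra).
  replace ((f y - f x) / (y - x) * (x - y)) with (f x - f y) in H1 by (field; lra). lra.
Qed.

Lemma all_pos (G : R -> Prop) :
  (exists d, 0 < d /\ forall t, 0 < t < d -> G t) ->
  (forall tau, 0 < tau -> (forall s, 0 < s < tau -> G s) -> G tau) ->
  (forall tau, 0 < tau -> G tau -> exists d, 0 < d /\ forall s, tau <= s < tau + d -> G s) ->
  forall t, 0 < t -> G t.
Proof.
  intros [d [Hd Hinit]] Hclosed Hopen t Ht.
  destruct (classic (G t)) as [HG|HnG]; auto. exfalso.
  set (E := fun x => 0 < x <= t /\ forall s, 0 < s < x -> G s).
  assert (HEb : bound E) by (exists t; intros x [Hx _]; lra).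
  assert (HEn : exists x, E x).
  { exists (Rmin d t). split.
    - split; [apply Rmin_glb_lt; lra | apply Rmin_r].
    - intros s Hs. apply Hinit. generalize (Rmin_l d t); lra. }
  destruct (completeness E HEb HEn) as [m [Hub Hlub]].
  assert (Hm_le : m <= t) by (apply Hlub; intros x [Hx _]; lra).
  destruct HEn as [x0 Hx0]. assert (Hm0 : 0 < m) by (generalize (Hub x0 Hx0); destruct Hx0; lra).
  assert (Hbelow : forall s, 0 < s < m -> G s).
  { intros s Hs. destruct (classic (exists x, E x /\ s < x)) as [[x [[Hx1 Hx2] Hsx]]|Hno].
    - apply Hx2; lra.
    - exfalso. assert (m <= s). { apply Hlub. intros x Hx. destruct (Rle_or_lt x s); auto.
        exfalso; apply Hno; exists x; auto. } lra. }
  assert (HGm : G m) by (apply Hclosed; auto).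
  destruct (Rle_lt_or_eq_dec m t Hm_le) as [Hlt|Heq]; [|subst; contradiction].
  destruct (Hopen m Hm0 HGm) as [d2 [Hd2 Hd2']].
  assert (E (Rmin (m + d2) t)).
  { split. - split; [apply Rmin_glb_lt; lra | apply Rmin_r].
    - intros s Hs. destruct (Rlt_or_le s m). + apply Hbelow; lra.
      + apply Hd2'. generalize (Rmin_l (m + d2) t); lra. }
  specialize (Hub _ H). generalize (Rmin_glb_lt (m + d2) t m ltac:(lra) Hlt). lra.
Qed.
Lemma dplus (f g : R -> R) (x a b : R) : is_derive f x a -> is_derive g x b -> is_derive (fun t => f t + g t) x (a + b).
Proof. intros Hf Hg. exact (is_derive_plus f g x a b Hf Hg). Qed.
Lemma dminus (f g : R -> R) (x a b : R) : is_derive f x a -> is_derive g x b -> is_derive (fun t => f t - g t) x (a - b).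
Proof. intros Hf Hg. exact (is_derive_minus f g x a b Hf Hg). Qed.
Lemma dmult (f g : R -> R) (x a b : R) : is_derive f x a -> is_derive g x b -> is_derive (fun t => f t * g t) x (a * g x + f x * b).
Proof. intros Hf Hg. exact (is_derive_mult f g x a b Hf Hg Rmult_comm). Qed.
Lemma dconst (c x : R) : is_derive (fun _ => c) x 0.
Proof. exact (is_derive_const c x). Qed.
Lemma dscal (f : R -> R) (k x a : R) : is_derive f x a -> is_derive (fun t => k * f t) x (k * a).
Proof. apply is_derive_scal. Qed.
Lemma did (x : R) : is_derive (fun t => t) x 1.
Proof. exact (@is_derive_id R_AbsRing x). Qed.
Lemma dcomp (f g : R -> R) (x a b : R) : is_derive f (g x) a -> is_derive g x b -> is_derive (fun t => f (g t)) x (b * a).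
Proof. intros Hf Hg. exact (is_derive_comp f g x a b Hf Hg). Qed.
Lemma dexp (k x : R) : is_derive (fun t => exp (k * t)) x (k * exp (k * x)).
Proof.
  assert (H : is_derive (fun t => k * t) x (k * 1)) by (apply dscal; apply did).
  generalize (dcomp exp (fun t => k * t) x _ _ (is_derive_exp _) H).
  intro H2. replace (k * exp (k * x)) with (k * 1 * exp (k * x)) by ring. exact H2.
Qed.
Lemma dln (f : R -> R) (x a : R) : 0 < f x -> is_derive f x a -> is_derive (fun t => ln (f t)) x (a / f x).
Proof. intros Hp Hf. generalize (dcomp ln f x _ _ (is_derive_ln _ Hp) Hf). intro H.
  unfold Rdiv. exact H. Qed.
Lemma dext (f g : R -> R) (x a b : R) : (forall t, f t = g t) -> a = b -> is_derive f x a -> is_derive g x b.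
Proof. intros E1 E2 H. subst b. eapply is_derive_ext; [exact E1|exact H]. Qed.

Lemma cauchy_mono (V : R -> R) t0 :
  (forall t t', t0 <= t -> t <= t' -> V t' <= V t) -> (forall t, t0 <= t -> 0 <= V t) ->
  forall eta, 0 < eta -> exists T, t0 <= T /\ forall t t', T <= t -> T <= t' -> Rabs (V t - V t') < eta.
Proof.
  intros Hm Hb eta He.
  set (E := fun x => exists t, t0 <= t /\ x = - V t).
  assert (HEb : bound E) by (exists 0; intros x [t [Ht ->]]; generalize (Hb t Ht); lra).
  assert (HEn : exists x, E x) by (exists (- V t0); exists t0; split; [lra|auto]).
  destruct (completeness E HEb HEn) as [M [Hub Hlub]].
  destruct (classic (exists T, t0 <= T /\ M - eta < - V T)) as [[T [HT HVT]]|Hno].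
  - exists T. split; auto. intros t t' Ht Ht'.
    assert (- V t <= M) by (apply Hub; exists t; split; [lra|auto]).
    assert (- V t' <= M) by (apply Hub; exists t'; split; [lra|auto]).
    generalize (Hm T t HT Ht) (Hm T t' HT Ht'). intros. apply Rabs_lt_between; lra.
  - exfalso. assert (M <= M - eta); [|lra]. apply Hlub. intros x [t [Ht ->]].
    destruct (Rle_or_lt (- V t) (M - eta)); auto. exfalso; apply Hno; exists t; auto.
Qed.

Lemma barb (V dV w dw : R -> R) (t0 K : R) :
  0 < K ->
  (forall t, t0 <= t -> is_derive V t (dV t)) ->
  (forall t, t0 <= t -> is_derive w t (dw t)) ->
  (forall t, t0 <= t -> Rabs (dw t) <= K) ->
  (forall t, t0 <= t -> w t <= - dV t) ->
  (forall eta, 0 < eta -> exists T, t0 <= T /\ forall t t', T <= t -> T <= t' -> Rabs (V t - V t') < eta) ->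
  forall eps, 0 < eps -> exists T, forall t, T <= t -> w t < eps.
Proof.
  intros HK HV Hw HdwK Hle Hc eps He.
  set (h := eps / (2 * K)).
  assert (Hh : 0 < h) by (unfold h; apply Rdiv_lt_0_compat; lra).
  assert (HKh : K * h = eps / 2) by (unfold h; field; lra).
  destruct (Hc (eps * h / 2) ltac:(nra)) as [T [HT HTc]].
  exists T. intros t Ht. destruct (Rlt_or_le (w t) eps) as [H|H]; auto. exfalso.
  assert (Hwx : forall x, t <= x <= t + h -> eps / 2 <= w x).
  { intros x Hx. assert (Rabs (w x - w t) <= K * (x - t)).
    { apply (mvt_lip w dw t x K); try lra.
      - intros y Hy. apply Hw; lra.
      - intros y Hy. apply HdwK; lra. }
    apply Rabs_le_between in H0. nra. }
  destruct (mvt V dV t (t + h) ltac:(lra)) as [c [Hc1 Hc2]].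
  { intros y Hy; apply HV; lra. }
  assert (eps / 2 <= - dV c) by (generalize (Hwx c Hc1) (Hle c ltac:(lra)); lra).
  specialize (HTc t (t + h) Ht ltac:(lra)).
  rewrite Rabs_minus_sym in HTc. apply Rabs_lt_between in HTc.
  replace (t + h - t) with h in Hc2 by ring. nra.
Qed.
Lemma pos_src (X Y : R -> R) (k d : R) :
  filterlim X (at_right 0) (locally (X 0)) -> 0 <= X 0 ->
  (forall t, 0 < t < d -> is_derive X t (Y t - k * X t)) ->
  (forall t, 0 < t < d -> 0 < Y t) ->
  forall t, 0 < t < d -> 0 < X t.
Proof.
  intros Hc H0 Hd HY.
  set (f := fun t => exp (k * t) * X t).
  assert (Hdf : forall t, 0 < t < d -> is_derive f t (exp (k * t) * Y t)).
  { intros t Ht. unfold f. eapply dext; [intro; reflexivity| |apply dmult; [apply dexp|apply Hd; auto]].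
    simpl. ring. }
  assert (Hfc : filterlim f (at_right 0) (locally (f 0))).
  { unfold f. apply rc_mult; auto.
    apply (rc_comp (fun t => k * t) exp (k * 0)).
    - apply rc_mult; [apply rc_const|apply rc_id].
    - apply (contf_of_der exp _ (exp (k * 0))). apply is_derive_exp. }
  assert (Hmono : forall a b, 0 < a -> a < b -> b < d -> f a <= f b).
  { intros a b Ha Hab Hb. apply (mvt_le f (fun t => exp (k * t) * Y t)); try lra.
    - intros x Hx; apply Hdf; lra.
    - intros x Hx. generalize (HY x ltac:(lra)) (exp_pos (k * x)); nra. }
  intros t Ht.
  assert (f 0 <= f (t / 2)) by (apply (mono0d f d); auto; lra).
  assert (f (t / 2) < f t).
  { apply (mvt_lt f (fun t => exp (k * t) * Y t)); try lra.
    - intros x Hx; apply Hdf; lra.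
    - intros x Hx. generalize (HY x ltac:(lra)) (exp_pos (k * x)); nra. }
  unfold f in *. replace (k * 0) with 0 in H by ring. rewrite exp_0 in H.
  generalize (exp_pos (k * t)); nra.
Qed.

Lemma exp_trick (X Y : R -> R) (k a b : R) : a <= b ->
  (forall t, a <= t <= b -> is_derive X t (Y t - k * X t)) ->
  (forall t, a <= t <= b -> 0 <= Y t) -> 0 < X a -> 0 < X b.
Proof.
  intros Hab Hd HY Ha.
  set (f := fun t => exp (k * t) * X t).
  assert (f a <= f b).
  { apply (mvt_le f (fun t => exp (k * t) * Y t)); auto.
    - intros t Ht. unfold f. eapply dext; [intro; reflexivity| |apply dmult; [apply dexp|apply Hd; auto]].
      simpl. ring.
    - intros x Hx. generalize (HY x Hx) (exp_pos (k * x)); nra. }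
  unfold f in H. generalize (exp_pos (k * a)) (exp_pos (k * b)); intros. 
  assert (0 < exp (k * a) * X a) by nra. nra.
Qed.

Lemma nonneg_lim (X : R -> R) tau : 0 < tau -> filterlim X (locally tau) (locally (X tau)) ->
  (forall s, 0 < s < tau -> 0 < X s) -> 0 <= X tau.
Proof.
  intros Ht Hc Hp. destruct (Rle_or_lt 0 (X tau)) as [H|H]; auto.
  destruct (cont_eps X tau Hc (- X tau) ltac:(lra)) as [d [Hd Hd']].
  set (y := tau - Rmin d tau / 2).
  assert (0 < Rmin d tau) by (apply Rmin_glb_lt; lra).
  generalize (Rmin_l d tau) (Rmin_r d tau); intros.
  specialize (Hd' y). specialize (Hp y). unfold y in *.
  rewrite Rabs_left in Hd' by lra.
  specialize (Hd' ltac:(lra)). specialize (Hp ltac:(lra)).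
  apply Rabs_lt_between in Hd'. lra.
Qed.

Lemma pos_near (X : R -> R) tau : filterlim X (locally tau) (locally (X tau)) -> 0 < X tau ->
  exists d, 0 < d /\ forall s, Rabs (s - tau) < d -> 0 < X s.
Proof.
  intros Hc Hp. destruct (cont_eps X tau Hc (X tau) Hp) as [d [Hd Hd']].
  exists d; split; auto. intros s Hs. specialize (Hd' s Hs). apply Rabs_lt_between in Hd'. lra.
Qed.

Lemma rc_pos (X : R -> R) l : filterlim X (at_right 0) (locally l) -> 0 < l ->
  exists d, 0 < d /\ forall t, 0 < t < d -> 0 < X t.
Proof.
  intros Hc Hp. destruct (rc_eps X l Hc l Hp) as [d [Hd Hd']].
  exists d; split; auto. intros s Hs. specialize (Hd' s Hs). apply Rabs_lt_between in Hd'. lra.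
Qed.

Lemma dext' (f : R -> R) (x a b : R) : is_derive f x a -> a = b -> is_derive f x b.
Proof. intros H E; subst; exact H. Qed.

Definition gfun (x : R) : R := x - 1 - ln x.
Definition gterm (Xs x : R) : R := Xs * gfun (x / Xs).

Lemma ln_le_xm1 x : 0 < x -> ln x <= x - 1.
Proof. intro Hx. generalize (exp_ineq1_le (ln x)). rewrite exp_ln by auto. lra. Qed.

Lemma gfun_nonneg x : 0 < x -> 0 <= gfun x.
Proof. intro Hx. unfold gfun. generalize (ln_le_xm1 x Hx). lra. Qed.

Lemma gterm_nonneg Xs x : 0 < Xs -> 0 < x -> 0 <= gterm Xs x.
Proof. intros. unfold gterm. apply Rmult_le_pos; [lra|]. apply gfun_nonneg. apply Rdiv_lt_0_compat; auto. Qed.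

Lemma amgm3 u v w : 0 < u -> 0 < v -> 0 < w -> u * v * w = 1 -> 3 <= u + v + w.
Proof.
  intros Hu Hv Hw E.
  assert (ln u + ln v + ln w = 0).
  { rewrite <- ln_mult, <- ln_mult by (try apply Rmult_lt_0_compat; auto). rewrite E. apply ln_1. }
  generalize (ln_le_xm1 u Hu) (ln_le_xm1 v Hv) (ln_le_xm1 w Hw). lra.
Qed.

Lemma dgterm (X : R -> R) (Xs t dx : R) : 0 < Xs -> 0 < X t -> is_derive X t dx ->
  is_derive (fun t => gterm Xs (X t)) t ((1 - Xs / X t) * dx).
Proof.
  intros HXs HX Hd. unfold gterm, gfun.
  assert (Hq : is_derive (fun t => X t / Xs) t (/ Xs * dx)).
  { eapply dext; [| |apply (dscal X (/ Xs) t dx Hd)]; intros; unfold Rdiv; ring. }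
  assert (Hpos : 0 < X t / Xs) by (apply Rdiv_lt_0_compat; auto).
  eapply dext'.
  - apply (dscal (fun t => X t / Xs - 1 - ln (X t / Xs)) Xs).
    apply dminus; [apply dminus; [exact Hq|apply dconst]|]. apply (dln (fun t => X t / Xs)); [exact Hpos|exact Hq].
  - field. split; lra.
Qed.

Lemma vdot_identity (Lam mu b1 rho phi alpha omega etaC etaA Ss Is Cs As S I C A : R) :
  0 < mu -> 0 < alpha -> 0 < omega -> 0 < Ss -> 0 < Is -> 0 < Cs -> 0 < As -> 0 < S -> 0 < I -> 0 < C -> 0 < A ->
  0 < Is + etaC * Cs + etaA * As ->
  Lam = b1 * (Is + etaC * Cs + etaA * As) * Ss + mu * Ss ->
  phi = (omega + mu) * Cs / Is ->
  rho = (alpha + mu) * As / Is ->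
  b1 = mu * (Is + Cs + As) / ((Is + etaC * Cs + etaA * As) * Ss) ->
  (1 - Ss / S) * (Lam - b1 * (I + etaC * C + etaA * A) * S - mu * S)
  + (1 - Is / I) * (b1 * (I + etaC * C + etaA * A) * S - (rho + phi + mu) * I + alpha * A + omega * C)
  + (b1 * Ss * etaC * Cs + omega * Cs) / (phi * Is) * ((1 - Cs / C) * (phi * I - (omega + mu) * C))
  + (b1 * Ss * etaA * As + alpha * As) / (rho * Is) * ((1 - As / A) * (rho * I - (alpha + mu) * A))
  = - ( mu * Ss * ((S / Ss - 1)^2 / (S / Ss)) + b1 * Ss * Is * ((S / Ss - 1)^2 / (S / Ss))
        + b1 * Ss * etaC * Cs * (/ (S / Ss) + (S / Ss) * (C / Cs) / (I / Is) + (I / Is) / (C / Cs) - 3)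
        + b1 * Ss * etaA * As * (/ (S / Ss) + (S / Ss) * (A / As) / (I / Is) + (I / Is) / (A / As) - 3)
        + omega * Cs * ((C / Cs - I / Is)^2 / ((C / Cs) * (I / Is)))
        + alpha * As * ((A / As - I / Is)^2 / ((A / As) * (I / Is)))).
Proof.
  intros Hmu Hal Hom HSs HIs HCs HAs HS HI HC HA HF HL Hphi Hrho Hb1.
  subst Lam. subst phi rho. subst b1.
  field. repeat split; lra.
Qed.

Definition ev (P : R -> Prop) : Prop := exists T, forall t, T <= t -> P t.
Definition tends (f : R -> R) (l : R) : Prop := forall eps, 0 < eps -> ev (fun t => Rabs (f t - l) < eps).

Lemma ev_and P Q : ev P -> ev Q -> ev (fun t => P t /\ Q t).
Proof.
  intros [T1 H1] [T2 H2]. exists (Rmax T1 T2). intros t Ht.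
  generalize (Rmax_l T1 T2) (Rmax_r T1 T2); intros. split; [apply H1|apply H2]; lra.
Qed.

Lemma ev_mono (P Q : R -> Prop) : (forall t, P t -> Q t) -> ev P -> ev Q.
Proof. intros H [T HT]. exists T. auto. Qed.

Lemma tends_lin (f g : R -> R) (a b lf lg : R) (h : R -> R) :
  tends f lf -> tends g lg -> ev (fun t => h t = a * f t + b * g t) -> tends h (a * lf + b * lg).
Proof.
  intros Hf Hg He eps Heps.
  set (e := eps / (Rabs a + Rabs b + 1)).
  assert (He0 : 0 < e) by (unfold e; apply Rdiv_lt_0_compat; [lra|generalize (Rabs_pos a) (Rabs_pos b); lra]).
  assert (Hke : (Rabs a + Rabs b + 1) * e = eps) by (unfold e; field; generalize (Rabs_pos a) (Rabs_pos b); lra).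
  generalize (ev_and _ _ (ev_and _ _ (Hf e He0) (Hg e He0)) He).
  apply ev_mono. intros t [[H1 H2] H3]. rewrite H3.
  replace (a * f t + b * g t - (a * lf + b * lg)) with (a * (f t - lf) + b * (g t - lg)) by ring.
  eapply Rle_lt_trans; [apply Rabs_triang|]. rewrite !Rabs_mult.
  generalize (Rabs_pos a) (Rabs_pos b) (Rabs_pos (f t - lf)) (Rabs_pos (g t - lg)). intros. nra.
Qed.

Lemma tends_const c : tends (fun _ => c) c.
Proof. intros eps He. exists 0. intros. replace (c - c) with 0 by ring. rewrite Rabs_R0; lra. Qed.

Lemma tends_sq (f : R -> R) (l k : R) : 0 < k -> (forall eps, 0 < eps -> ev (fun t => k * ((f t - l) * (f t - l)) < eps)) -> tends f l.
Proof.
  intros Hk H eps He. apply (ev_mono (fun t => k * ((f t - l) * (f t - l)) < k * (eps * eps))).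
  - intros t Ht. destruct (Rlt_or_le (Rabs (f t - l)) eps) as [h|h]; auto. exfalso.
    destruct (Rcase_abs (f t - l)) as [hn|hp].
    + rewrite Rabs_left in h by lra. assert (eps * eps <= (f t - l) * (f t - l)) by nra.
      generalize (Rmult_le_compat_l k _ _ (Rlt_le _ _ Hk) H0). lra.
    + rewrite Rabs_right in h by lra. assert (eps * eps <= (f t - l) * (f t - l)) by nra.
      generalize (Rmult_le_compat_l k _ _ (Rlt_le _ _ Hk) H0). lra.
  - apply H. apply Rmult_lt_0_compat; [lra|]; apply Rmult_lt_0_compat; lra.
Qed.

Lemma tends_is_lim (f : R -> R) l : tends f l -> is_lim f p_infty l.
Proof.
  intro H. apply is_lim_spec. intro eps. destruct (H eps (cond_pos eps)) as [T HT].
  exists T. intros x Hx. apply HT; lra.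
Qed.

Lemma dsq (f : R -> R) (t a : R) : is_derive f t a -> is_derive (fun t => (f t)^2) t (2 * f t * a).
Proof.
  intro H. eapply dext; [| |apply (dmult f f t a a H H)]; intros; simpl; ring.
Qed.

Lemma rc_gterm (X : R -> R) (Xs x0 : R) : 0 < Xs -> 0 < x0 -> filterlim X (at_right 0) (locally x0) ->
  filterlim (fun t => gterm Xs (X t)) (at_right 0) (locally (gterm Xs x0)).
Proof.
  intros HXs Hx0 Hc. apply (rc_comp X (gterm Xs) x0 Hc).
  apply (contf_of_der (gterm Xs) x0 ((1 - Xs / x0) * 1)).
  apply (dgterm (fun t => t) Xs x0 1 HXs Hx0 (did x0)).
Qed.

Lemma inv_bound (k q p P : R) : 0 <= k -> 0 <= q -> 0 < p -> p <= P -> k * q / P <= k * (q / p).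
Proof.
  intros Hk Hq Hp HpP.
  assert (k * (q / p) - k * q / P = k * q * (P - p) / (p * P)) by (field; lra).
  assert (0 <= k * q * (P - p) / (p * P)).
  { apply Rdiv_le_0_compat; [|nra]. apply Rmult_le_pos; nra. }
  lra.
Qed.

Lemma abs_diff_div (x y p q X Y : R) : 0 < p -> 0 < q -> Rabs x <= X -> Rabs y <= Y ->
  Rabs (x / p - y / q) <= X / p + Y / q.
Proof.
  intros Hp Hq Hx Hy. apply Rabs_le_between in Hx. apply Rabs_le_between in Hy.
  assert (0 < / p) by (apply Rinv_0_lt_compat; auto).
  assert (0 < / q) by (apply Rinv_0_lt_compat; auto).
  unfold Rdiv. apply Rabs_le. split; nra.
Qed.

Lemma tends_lin' (f g h : R -> R) (a b lf lg l : R) :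
  tends f lf -> tends g lg -> ev (fun t => h t = a * f t + b * g t) -> l = a * lf + b * lg -> tends h l.
Proof. intros Hf Hg He El. subst l. apply (tends_lin f g a b lf lg h); auto. Qed.

Lemma g_lower x th : 0 < x -> gfun x < th -> th <= 1 -> (x - 1)^2 < 9 * th.
Proof.
  intros Hx Hg Hth. set (y := sqrt x).
  assert (Hy : 0 < y) by (apply sqrt_lt_R0; auto).
  assert (Hyy : y * y = x) by (apply sqrt_sqrt; lra).
  assert (Hl : ln x = ln y + ln y) by (rewrite <- Hyy; apply ln_mult; auto).
  generalize (ln_le_xm1 y Hy); intro.
  unfold gfun in Hg. rewrite Hl, <- Hyy in Hg. rewrite <- Hyy.
  assert (Hq : (y - 1)^2 < th) by nra.
  assert (y < 2) by nra.
  assert ((y + 1)^2 <= 9) by nra.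
  replace ((y * y - 1)^2) with ((y - 1)^2 * (y + 1)^2) by ring.
  assert (0 <= (y - 1)^2) by apply pow2_ge_0.
  nra.
Qed.

Lemma g_upper x : 1/2 <= x -> gfun x <= 2 * (x - 1)^2.
Proof.
  intro Hx. unfold gfun.
  assert (0 < / x) by (apply Rinv_0_lt_compat; lra).
  generalize (ln_le_xm1 (/ x) H). rewrite ln_Rinv by lra. intro.
  assert (x - 1 - ln x <= (x - 1)^2 / x).
  { assert ((x - 1)^2 / x = x - 2 + / x) by (field; lra). lra. }
  assert ((x - 1)^2 / x <= 2 * (x - 1)^2).
  { assert (2 * (x - 1)^2 - (x - 1)^2 / x = (x - 1)^2 * (2 * x - 1) / x) by (field; lra).
    assert (0 <= (x - 1)^2 * (2 * x - 1) / x).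
    { apply Rdiv_le_0_compat; [|lra]. apply Rmult_le_pos; [apply pow2_ge_0|lra]. }
    lra. }
  lra.
Qed.

Lemma comp_lower (Xs w eps : R) : 0 < Xs -> 0 < w -> 0 < eps ->
  exists eta, 0 < eta /\ forall x, 0 < x -> w * gterm Xs x < eta -> (x - Xs)^2 < eps^2 / 4.
Proof.
  intros HXs Hw He.
  set (eta := Rmin (w * Xs) (eps^2 * w / (36 * Xs))).
  assert (Heta : 0 < eta).
  { unfold eta. apply Rmin_glb_lt; [nra|]. apply Rdiv_lt_0_compat; [apply Rmult_lt_0_compat; [apply pow_lt|]|]; lra. }
  exists eta. split; auto. intros x Hx Hlt.
  assert (Hth1 : eta / (w * Xs) <= 1).
  { apply (Rmult_le_reg_r (w * Xs)); [nra|]. unfold Rdiv. rewrite Rmult_assoc, Rinv_l by nra.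
    generalize (Rmin_l (w * Xs) (eps^2 * w / (36 * Xs))); fold eta; lra. }
  assert (Hg : gfun (x / Xs) < eta / (w * Xs)).
  { unfold gterm in Hlt. apply (Rmult_lt_reg_r (w * Xs)); [nra|]. unfold Rdiv at 2.
    rewrite Rmult_assoc, Rinv_l by nra. lra. }
  generalize (g_lower (x / Xs) _ (Rdiv_lt_0_compat _ _ Hx HXs) Hg Hth1). intro Hq.
  replace ((x - Xs)^2) with (Xs^2 * (x / Xs - 1)^2) by (field; lra).
  assert (Xs^2 * (x / Xs - 1)^2 < Xs^2 * (9 * (eta / (w * Xs)))) by (apply Rmult_lt_compat_l; nra).
  assert (Xs^2 * (9 * (eta / (w * Xs))) = 9 * Xs * eta / w) by (field; lra).
  assert (9 * Xs * eta / w <= eps^2 / 4).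
  { generalize (Rmin_r (w * Xs) (eps^2 * w / (36 * Xs))); fold eta; intro.
    apply (Rmult_le_reg_r w); auto. unfold Rdiv. rewrite Rmult_assoc, Rinv_l by lra.
    apply (Rmult_le_reg_r (/ (9 * Xs))); [apply Rinv_0_lt_compat; nra|].
    replace (9 * Xs * eta * 1 * / (9 * Xs)) with eta by (field; lra).
    replace (eps ^ 2 * / 4 * w * / (9 * Xs)) with (eps^2 * w / (36 * Xs)) by (field; lra). lra. }
  lra.
Qed.

Lemma comp_upper (Xs w eta : R) : 0 < Xs -> 0 < w -> 0 < eta ->
  exists d, 0 < d /\ forall x, Rabs (x - Xs) < d -> 0 < x /\ w * gterm Xs x < eta.
Proof.
  intros HXs Hw He.
  set (q := eta * Xs / (2 * w)).
  assert (Hq0 : 0 < q) by (unfold q; apply Rdiv_lt_0_compat; nra).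
  set (d := Rmin (Xs / 2) (sqrt q)).
  assert (Hs : 0 < sqrt q) by (apply sqrt_lt_R0; auto).
  assert (Hd : 0 < d) by (unfold d; apply Rmin_glb_lt; lra).
  exists d. split; auto. intros x Hx.
  generalize (Rmin_l (Xs / 2) (sqrt q)) (Rmin_r (Xs / 2) (sqrt q)); fold d; intros.
  assert (Ha : Rabs (x - Xs) < sqrt q) by lra.
  apply Rabs_lt_between in Hx. split; [lra|].
  assert (Hq : (x - Xs)^2 < q).
  { rewrite <- pow2_abs. generalize (sqrt_sqrt q (Rlt_le _ _ Hq0)) (Rabs_pos (x - Xs)). intros. nra. }
  assert (Hx2 : 1/2 <= x / Xs).
  { apply (Rmult_le_reg_r Xs); auto. replace (x / Xs * Xs) with x by (field; lra). lra. }
  generalize (g_upper _ Hx2). intro Hg. unfold gterm.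
  assert (w * (Xs * gfun (x / Xs)) <= w * Xs * (2 * (x / Xs - 1)^2)).
  { rewrite <- Rmult_assoc. apply Rmult_le_compat_l; nra. }
  assert (w * Xs * (2 * (x / Xs - 1)^2) = 2 * w / Xs * (x - Xs)^2) by (field; lra).
  assert (2 * w / Xs * (x - Xs)^2 < 2 * w / Xs * q).
  { apply Rmult_lt_compat_l; auto. apply Rdiv_lt_0_compat; lra. }
  assert (2 * w / Xs * q = eta) by (unfold q; field; lra).
  lra.
Qed.

Lemma abs_le_sqrt (x r : R) : 0 <= r -> x^2 <= r -> Rabs x <= sqrt r.
Proof.
  intros Hr Hx. rewrite <- sqrt_Rsqr_abs. apply sqrt_le_1_alt. unfold Rsqr. simpl in Hx. lra.
Qed.

Lemma dist_comp s i c a s' i' c' a' :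
  Rabs (s - s') <= dist4 s i c a s' i' c' a' /\ Rabs (i - i') <= dist4 s i c a s' i' c' a' /\
  Rabs (c - c') <= dist4 s i c a s' i' c' a' /\ Rabs (a - a') <= dist4 s i c a s' i' c' a'.
Proof.
  unfold dist4.
  generalize (pow2_ge_0 (s - s')) (pow2_ge_0 (i - i')) (pow2_ge_0 (c - c')) (pow2_ge_0 (a - a')). intros.
  repeat split; apply abs_le_sqrt; lra.
Qed.

Lemma dist_small s i c a s' i' c' a' e : 0 < e ->
  (s - s')^2 < e^2 / 4 -> (i - i')^2 < e^2 / 4 -> (c - c')^2 < e^2 / 4 -> (a - a')^2 < e^2 / 4 ->
  dist4 s i c a s' i' c' a' < e.
Proof.
  intros He H1 H2 H3 H4. unfold dist4.
  rewrite <- (sqrt_pow2 e) by lra. apply sqrt_lt_1_alt.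
  generalize (pow2_ge_0 (s - s')) (pow2_ge_0 (i - i')) (pow2_ge_0 (c - c')) (pow2_ge_0 (a - a')). intros.
  split; lra.
Qed.


Section Model.
Variables Lam mu beta rho phi alpha omega etaC etaA : R.
Hypothesis HLam : 0 < Lam.
Hypothesis Hmu : 0 < mu.
Hypothesis Hbeta : 0 < beta.
Hypothesis Hrho : 0 < rho.
Hypothesis Hphi : 0 < phi.
Hypothesis Halpha : 0 < alpha.
Hypothesis Homega : 0 < omega.
Hypothesis HetaC : 0 < etaC.
Hypothesis HetaA : 0 < etaA.

Local Notation b1 := (beta1 Lam mu beta).
Lemma Hb1 : 0 < b1.
Proof. unfold beta1. apply Rdiv_lt_0_compat; nra. Qed.

Variables Ss Is Cs As : R.
Hypothesis HSs : 0 < Ss.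
Hypothesis HIs : 0 < Is.
Hypothesis HCs : 0 < Cs.
Hypothesis HAs : 0 < As.
Hypothesis EL : Lam = b1 * (Is + etaC * Cs + etaA * As) * Ss + mu * Ss.
Hypothesis Ephi : phi = (omega + mu) * Cs / Is.
Hypothesis Erho : rho = (alpha + mu) * As / Is.
Hypothesis Eb1 : b1 = mu * (Is + Cs + As) / ((Is + etaC * Cs + etaA * As) * Ss).

Lemma HFs : 0 < Is + etaC * Cs + etaA * As.
Proof. nra. Qed.

Lemma sum_eq : Ss + Is + Cs + As = Lam / mu.
Proof.
  generalize HFs; intro.
  assert (E : b1 * (Is + etaC * Cs + etaA * As) * Ss = mu * (Is + Cs + As)) by (rewrite Eb1; field; split; lra).
  assert (E2 : Lam / mu = (b1 * (Is + etaC * Cs + etaA * As) * Ss + mu * Ss) / mu) by (f_equal; exact EL).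
  rewrite E2, E. field. lra.
Qed.

Let cw := (b1 * Ss * etaC * Cs + omega * Cs) / (phi * Is).
Let dw := (b1 * Ss * etaA * As + alpha * As) / (rho * Is).
Lemma cw_pos : 0 < cw.
Proof. generalize Hb1; intro. unfold cw. apply Rdiv_lt_0_compat; [|nra]. 
  assert (0 < b1 * Ss * etaC * Cs) by (repeat first [assumption | apply Rmult_lt_0_compat]). nra. Qed.
Lemma dw_pos : 0 < dw.
Proof. generalize Hb1; intro. unfold dw. apply Rdiv_lt_0_compat; [|nra]. 
  assert (0 < b1 * Ss * etaA * As) by (repeat first [assumption | apply Rmult_lt_0_compat]). nra. Qed.

Definition Vf (s i c a : R) := gterm Ss s + gterm Is i + cw * gterm Cs c + dw * gterm As a.

Definition Vdf (s i c a : R) :=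
  (1 - Ss / s) * (Lam - b1 * (i + etaC * c + etaA * a) * s - mu * s)
  + (1 - Is / i) * (b1 * (i + etaC * c + etaA * a) * s - (rho + phi + mu) * i + alpha * a + omega * c)
  + cw * ((1 - Cs / c) * (phi * i - (omega + mu) * c))
  + dw * ((1 - As / a) * (rho * i - (alpha + mu) * a)).

Lemma Vdf_bound s i c a : 0 < s -> 0 < i -> 0 < c -> 0 < a ->
  Vdf s i c a + mu * Ss * ((s / Ss - 1)^2 / (s / Ss))
  + omega * Cs * ((c / Cs - i / Is)^2 / ((c / Cs) * (i / Is)))
  + alpha * As * ((a / As - i / Is)^2 / ((a / As) * (i / Is))) <= 0.
Proof.
  intros Hs Hi Hc Ha. unfold Vdf, cw, dw.
  rewrite (vdot_identity Lam mu b1 rho phi alpha omega etaC etaA Ss Is Cs As s i c a); auto using HFs.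
  generalize Hb1; intro Hb.
  assert (Hr : 0 < s / Ss) by (apply Rdiv_lt_0_compat; auto).
  assert (Hri : 0 < i / Is) by (apply Rdiv_lt_0_compat; auto).
  assert (Hrc : 0 < c / Cs) by (apply Rdiv_lt_0_compat; auto).
  assert (Hra : 0 < a / As) by (apply Rdiv_lt_0_compat; auto).
  assert (T1 : 0 <= b1 * Ss * Is * ((s / Ss - 1)^2 / (s / Ss))).
  { apply Rmult_le_pos; [repeat first [lra | apply Rmult_le_pos]|]. apply Rdiv_le_0_compat; [apply pow2_ge_0|auto]. }
  assert (T2 : 0 <= b1 * Ss * etaC * Cs * (/ (s / Ss) + (s / Ss) * (c / Cs) / (i / Is) + (i / Is) / (c / Cs) - 3)).
  { apply Rmult_le_pos; [repeat first [lra | apply Rmult_le_pos]|].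
    assert (3 <= / (s / Ss) + (s / Ss) * (c / Cs) / (i / Is) + (i / Is) / (c / Cs)); [|lra].
    apply amgm3.
    - apply Rinv_0_lt_compat; auto.
    - apply Rdiv_lt_0_compat; [apply Rmult_lt_0_compat|]; auto.
    - apply Rdiv_lt_0_compat; auto.
    - field. repeat split; lra. }
  assert (T3 : 0 <= b1 * Ss * etaA * As * (/ (s / Ss) + (s / Ss) * (a / As) / (i / Is) + (i / Is) / (a / As) - 3)).
  { apply Rmult_le_pos; [repeat first [lra | apply Rmult_le_pos]|].
    assert (3 <= / (s / Ss) + (s / Ss) * (a / As) / (i / Is) + (i / Is) / (a / As)); [|lra].
    apply amgm3.
    - apply Rinv_0_lt_compat; auto.
    - apply Rdiv_lt_0_compat; [apply Rmult_lt_0_compat|]; auto.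
    - apply Rdiv_lt_0_compat; auto.
    - field. repeat split; lra. }
  lra.
Qed.

Let M := Lam / mu.
Let K0 := Lam + b1 * (1 + etaC + etaA) * M * M + (rho + phi + alpha + omega + 3 * mu) * M.

Lemma Fbound s i c a : 0 < s <= M -> 0 < i <= M -> 0 < c <= M -> 0 < a <= M ->
  0 <= b1 * (i + etaC * c + etaA * a) * s <= b1 * (1 + etaC + etaA) * M * M.
Proof.
  intros Hs Hi Hc Ha. generalize Hb1; intro Hb.
  assert (0 <= i + etaC * c + etaA * a <= (1 + etaC + etaA) * M) by nra.
  assert (0 <= (i + etaC * c + etaA * a) * s <= (1 + etaC + etaA) * M * M) by nra.
  split; nra.
Qed.

Lemma bS s i c a : 0 < s <= M -> 0 < i <= M -> 0 < c <= M -> 0 < a <= M ->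
  Rabs (Lam - b1 * (i + etaC * c + etaA * a) * s - mu * s) <= K0.
Proof.
  intros Hs Hi Hc Ha. generalize (Fbound s i c a Hs Hi Hc Ha); intro. unfold K0.
  assert (0 <= M) by lra.
  apply Rabs_le. split; nra.
Qed.

Lemma bI s i c a : 0 < s <= M -> 0 < i <= M -> 0 < c <= M -> 0 < a <= M ->
  Rabs (b1 * (i + etaC * c + etaA * a) * s - (rho + phi + mu) * i + alpha * a + omega * c) <= K0.
Proof.
  intros Hs Hi Hc Ha. generalize (Fbound s i c a Hs Hi Hc Ha); intro. unfold K0.
  apply Rabs_le. split; nra.
Qed.

Lemma bC i c : 0 < i <= M -> 0 < c <= M -> Rabs (phi * i - (omega + mu) * c) <= K0.
Proof.
  intros Hi Hc. generalize (Fbound M i c c ltac:(unfold M in *; split; [apply Rdiv_lt_0_compat|]; lra) Hi Hc Hc); intro.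
  unfold K0. apply Rabs_le. split; nra.
Qed.

Lemma bA i a : 0 < i <= M -> 0 < a <= M -> Rabs (rho * i - (alpha + mu) * a) <= K0.
Proof.
  intros Hi Ha. generalize (Fbound M i a a ltac:(unfold M in *; split; [apply Rdiv_lt_0_compat|]; lra) Hi Ha Ha); intro.
  unfold K0. apply Rabs_le. split; nra.
Qed.

Section Sol.
Variables S I C A : R -> R.
Hypothesis Hsol : is_solution Lam mu beta rho phi alpha omega etaC etaA S I C A.
Hypothesis H0 : in_Omega Lam mu (S 0) (I 0) (C 0) (A 0).
Hypothesis Hn0 : ~ in_Omega0 Lam mu (S 0) (I 0) (C 0) (A 0).

Let F t := I t + etaC * C t + etaA * A t.

Lemma dS t : 0 < t -> is_derive S t (Lam - b1 * F t * S t - mu * S t).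
Proof. intro Ht. apply (proj1 (proj1 Hsol t Ht)). Qed.
Lemma dI t : 0 < t -> is_derive I t (b1 * F t * S t - (rho + phi + mu) * I t + alpha * A t + omega * C t).
Proof. intro Ht. apply (proj1 (proj2 (proj1 Hsol t Ht))). Qed.
Lemma dC t : 0 < t -> is_derive C t (phi * I t - (omega + mu) * C t).
Proof. intro Ht. apply (proj1 (proj2 (proj2 (proj1 Hsol t Ht)))). Qed.
Lemma dA t : 0 < t -> is_derive A t (rho * I t - (alpha + mu) * A t).
Proof. intro Ht. apply (proj2 (proj2 (proj2 (proj1 Hsol t Ht)))). Qed.

Lemma rcS : filterlim S (at_right 0) (locally (S 0)). Proof. apply Hsol. Qed.
Lemma rcI : filterlim I (at_right 0) (locally (I 0)). Proof. apply Hsol. Qed.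
Lemma rcC : filterlim C (at_right 0) (locally (C 0)). Proof. apply Hsol. Qed.
Lemma rcA : filterlim A (at_right 0) (locally (A 0)). Proof. apply Hsol. Qed.

Lemma cS t : 0 < t -> filterlim S (locally t) (locally (S t)). Proof. intro H; eapply contf_of_der, dS, H. Qed.
Lemma cI t : 0 < t -> filterlim I (locally t) (locally (I t)). Proof. intro H; eapply contf_of_der, dI, H. Qed.
Lemma cC t : 0 < t -> filterlim C (locally t) (locally (C t)). Proof. intro H; eapply contf_of_der, dC, H. Qed.
Lemma cA t : 0 < t -> filterlim A (locally t) (locally (A t)). Proof. intro H; eapply contf_of_der, dA, H. Qed.

Lemma rcF : filterlim F (at_right 0) (locally (I 0 + etaC * C 0 + etaA * A 0)).
Proof. unfold F. repeat apply rc_plus; try apply rc_mult; try apply rc_const; auto using rcI, rcC, rcA. Qed.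

Lemma init_pos : exists d, 0 < d /\ forall t, 0 < t < d -> 0 < S t /\ 0 < I t /\ 0 < C t /\ 0 < A t.
Proof.
  destruct H0 as [HS0 [HI0 [HC0 [HA0 _]]]].
  assert (HSp : exists d, 0 < d /\ forall t, 0 < t < d -> 0 < S t).
  { destruct (Rle_lt_or_eq_dec _ _ HS0) as [Hp|He].
    - apply (rc_pos S (S 0)); auto using rcS.
    - assert (Hl : filterlim (fun t => Lam - b1 * F t * S t - mu * S t) (at_right 0)
                 (locally (Lam - b1 * (I 0 + etaC * C 0 + etaA * A 0) * S 0 - mu * S 0))).
      { apply rc_minus; [apply rc_minus|]; try apply rc_mult; try apply rc_mult; auto using rc_const, rcS, rcF. }
      rewrite <- He in Hl. replace (Lam - b1 * (I 0 + etaC * C 0 + etaA * A 0) * 0 - mu * 0) with Lam in Hl by ring.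
      destruct (rc_pos _ _ Hl HLam) as [d [Hd Hd']]. exists d; split; auto.
      apply (pos_src S (fun t => Lam - b1 * F t * S t - mu * S t) 0 d rcS HS0).
      + intros t Ht. eapply dext'. apply dS; lra. lra.
      + auto. }
  assert (HIp : exists d, 0 < d /\ forall t, 0 < t < d -> 0 < I t).
  { destruct (Rle_lt_or_eq_dec _ _ HI0) as [Hp|He].
    - apply (rc_pos I (I 0)); auto using rcI.
    - assert (Hl : filterlim (fun t => b1 * F t * S t - (rho + phi + mu) * I t + alpha * A t + omega * C t) (at_right 0)
                 (locally (b1 * (I 0 + etaC * C 0 + etaA * A 0) * S 0 - (rho + phi + mu) * I 0 + alpha * A 0 + omega * C 0))).
      { apply rc_plus; [apply rc_plus; [apply rc_minus|]|]; repeat apply rc_mult; auto using rc_const, rcS, rcF, rcI, rcA, rcC. }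
      assert (Hpos : 0 < b1 * (I 0 + etaC * C 0 + etaA * A 0) * S 0 - (rho + phi + mu) * I 0 + alpha * A 0 + omega * C 0).
      { rewrite <- He. assert (0 < C 0 \/ 0 < A 0).
        { destruct (Rle_lt_or_eq_dec _ _ HC0); auto. destruct (Rle_lt_or_eq_dec _ _ HA0); auto.
          exfalso. apply Hn0. split; auto. }
        generalize Hb1; intro. assert (0 <= b1 * (0 + etaC * C 0 + etaA * A 0) * S 0).
        { apply Rmult_le_pos; [|lra]. apply Rmult_le_pos; nra. }
        destruct H; nra. }
      destruct (rc_pos _ _ Hl Hpos) as [d [Hd Hd']]. exists d; split; auto.
      apply (pos_src I (fun t => b1 * F t * S t - (rho + phi + mu) * I t + alpha * A t + omega * C t) 0 d rcI HI0).
      + intros t Ht. eapply dext'; [apply dI; lra|lra].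
      + auto. }
  destruct HSp as [d1 [Hd1 H1]]. destruct HIp as [d2 [Hd2 H2]].
  exists (Rmin d1 d2). split; [apply Rmin_glb_lt; auto|].
  generalize (Rmin_l d1 d2) (Rmin_r d1 d2); intros Hm1 Hm2.
  assert (HIm : forall t, 0 < t < Rmin d1 d2 -> 0 < I t) by (intros; apply H2; lra).
  intros t Ht. split; [apply H1; lra|]. split; [apply HIm; auto|]. split.
  - apply (pos_src C (fun t => phi * I t) (omega + mu) (Rmin d1 d2) rcC HC0); auto.
    + intros s Hs. apply dC; lra.
    + intros s Hs. generalize (HIm s Hs); nra.
  - apply (pos_src A (fun t => rho * I t) (alpha + mu) (Rmin d1 d2) rcA HA0); auto.
    + intros s Hs. apply dA; lra.
    + intros s Hs. generalize (HIm s Hs); nra.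
Qed.


Let G t := 0 < S t /\ 0 < I t /\ 0 < C t /\ 0 < A t.

Lemma closed_step tau : 0 < tau -> (forall s, 0 < s < tau -> G s) -> G tau.
Proof.
  intros Ht HG.
  assert (nS : 0 <= S tau) by (apply nonneg_lim; auto using cS; intros s Hs; apply HG; auto).
  assert (nI : 0 <= I tau) by (apply nonneg_lim; auto using cI; intros s Hs; apply HG; auto).
  assert (nC : 0 <= C tau) by (apply nonneg_lim; auto using cC; intros s Hs; apply HG; auto).
  assert (nA : 0 <= A tau) by (apply nonneg_lim; auto using cA; intros s Hs; apply HG; auto).
  assert (Hnn : forall t, tau / 2 <= t <= tau -> 0 <= S t /\ 0 <= I t /\ 0 <= C t /\ 0 <= A t).
  { intros t Htt. destruct (Rle_lt_or_eq_dec t tau ltac:(lra)) as [Hl|He].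
    - destruct (HG t ltac:(lra)) as [a [b [c d]]]. lra.
    - subst; auto. }
  generalize Hb1; intro Hb.
  assert (pC : 0 < C tau).
  { apply (exp_trick C (fun t => phi * I t) (omega + mu) (tau / 2) tau); try lra.
    - intros t Htt. apply dC; lra.
    - intros t Htt. destruct (Hnn t Htt) as [_ [h _]]. nra.
    - apply HG; lra. }
  assert (pA : 0 < A tau).
  { apply (exp_trick A (fun t => rho * I t) (alpha + mu) (tau / 2) tau); try lra.
    - intros t Htt. apply dA; lra.
    - intros t Htt. destruct (Hnn t Htt) as [_ [h _]]. nra.
    - apply HG; lra. }
  assert (pI : 0 < I tau).
  { apply (exp_trick I (fun t => b1 * F t * S t + alpha * A t + omega * C t) (rho + phi + mu) (tau / 2) tau); try lra.
    - intros t Htt. eapply dext'; [apply dI; lra|lra].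
    - intros t Htt. destruct (Hnn t Htt) as [h1 [h2 [h3 h4]]]. unfold F.
      assert (0 <= b1 * (I t + etaC * C t + etaA * A t) * S t).
      { apply Rmult_le_pos; [|lra]. apply Rmult_le_pos; nra. }
      nra.
    - apply HG; lra. }
  assert (pS : 0 < S tau).
  { destruct (Rle_lt_or_eq_dec _ _ nS) as [h|h]; auto. exfalso.
    destruct (deriv_left_lt S tau (Lam - b1 * F tau * S tau - mu * S tau)) as [d [Hd Hd']].
    - apply dS; auto.
    - rewrite <- h. lra.
    - set (y := tau - Rmin d tau / 2).
      assert (0 < Rmin d tau) by (apply Rmin_glb_lt; lra).
      generalize (Rmin_l d tau) (Rmin_r d tau); intros.
      specialize (Hd' y ltac:(unfold y; lra)). destruct (HG y ltac:(unfold y; lra)). lra. }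
  repeat split; auto.
Qed.

Lemma open_step tau : 0 < tau -> G tau -> exists d, 0 < d /\ forall s, tau <= s < tau + d -> G s.
Proof.
  intros Ht [h1 [h2 [h3 h4]]].
  destruct (pos_near S tau (cS tau Ht) h1) as [d1 [e1 f1]].
  destruct (pos_near I tau (cI tau Ht) h2) as [d2 [e2 f2]].
  destruct (pos_near C tau (cC tau Ht) h3) as [d3 [e3 f3]].
  destruct (pos_near A tau (cA tau Ht) h4) as [d4 [e4 f4]].
  exists (Rmin (Rmin d1 d2) (Rmin d3 d4)). split.
  - repeat apply Rmin_glb_lt; auto.
  - intros s Hs. generalize (Rmin_l (Rmin d1 d2) (Rmin d3 d4)) (Rmin_r (Rmin d1 d2) (Rmin d3 d4))
      (Rmin_l d1 d2) (Rmin_r d1 d2) (Rmin_l d3 d4) (Rmin_r d3 d4). intros.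
    repeat split; [apply f1|apply f2|apply f3|apply f4]; rewrite Rabs_right; lra.
Qed.

Lemma all_positive t : 0 < t -> 0 < S t /\ 0 < I t /\ 0 < C t /\ 0 < A t.
Proof.
  apply (all_pos G).
  - exact init_pos.
  - exact closed_step.
  - exact open_step.
Qed.

Let N t := S t + I t + C t + A t.

Lemma hN t : 0 < t -> exp (mu * t) * (N t - Lam / mu) = N 0 - Lam / mu.
Proof.
  intro Ht.
  set (h := fun t => exp (mu * t) * (N t - Lam / mu)).
  assert (Hd : forall x, 0 < x -> is_derive h x 0).
  { intros x Hx. unfold h.
    eapply dext'; [apply dmult; [apply dexp|apply dminus; [|apply dconst]]|].
    - unfold N. apply dplus; [apply dplus; [apply dplus|]|]; [apply dS|apply dI|apply dC|apply dA]; lra.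
    - unfold N, F. field. lra. }
  assert (Hc : filterlim h (at_right 0) (locally (h 0))).
  { unfold h. apply rc_mult.
    - apply (rc_comp (fun t => mu * t) exp (mu * 0)).
      + apply rc_mult; [apply rc_const|apply rc_id].
      + apply (contf_of_der exp _ (exp (mu * 0))). apply is_derive_exp.
    - apply rc_minus; [|apply rc_const]. unfold N.
      repeat apply rc_plus; auto using rcS, rcI, rcC, rcA. }
  assert (E1 : h 0 <= h t).
  { apply mono0; auto. intros a b Ha Hab. apply (mvt_le h (fun _ => 0)).
    - lra.
    - intros x Hx; apply Hd; lra.
    - intros; lra. }
  assert (E2 : (fun t => - h t) 0 <= (fun t => - h t) t).
  { apply (mono0 (fun t => - h t)).
    - apply (filterlim_ext (fun t => -1 * h t)); [intro; ring|].
      replace (- h 0) with (-1 * h 0) by ring. apply rc_mult; auto using rc_const.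
    - intros a b Ha Hab. apply (mvt_le (fun t => - h t) (fun _ => 0)).
      + lra.
      + intros x Hx. eapply dext; [| |apply (dscal h (-1)); apply Hd; lra]; intros; lra.
      + intros; lra.
    + lra. }
  simpl in E2. unfold h in E1, E2. replace (mu * 0) with 0 in E1, E2 by ring.
  rewrite exp_0 in E1, E2. lra.
Qed.

Lemma N_le t : 0 <= t -> N t <= Lam / mu.
Proof.
  intro Ht. destruct H0 as [_ [_ [_ [_ HN0]]]].
  destruct (Rle_lt_or_eq_dec 0 t Ht) as [Hp|He]; [|subst; unfold N; lra].
  generalize (hN t Hp) (exp_pos (mu * t)). fold (N 0) in HN0. intros. nra.
Qed.

Lemma bounds t : 0 < t -> 0 < S t <= Lam / mu /\ 0 < I t <= Lam / mu /\ 0 < C t <= Lam / mu /\ 0 < A t <= Lam / mu.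
Proof.
  intro Ht. generalize (N_le t ltac:(lra)) (all_positive t Ht). unfold N. lra.
Qed.

Let Vt t := Vf (S t) (I t) (C t) (A t).
Let Vd t := Vdf (S t) (I t) (C t) (A t).

Lemma dV t : 0 < t -> is_derive Vt t (Vd t).
Proof.
  intro Ht. destruct (all_positive t Ht) as [p1 [p2 [p3 p4]]].
  unfold Vt, Vd, Vf, Vdf.
  eapply dext'.
  - apply dplus; [apply dplus; [apply dplus|]|].
    + apply dgterm; auto. apply dS; auto.
    + apply dgterm; auto. apply dI; auto.
    + apply (dscal (fun t => gterm Cs (C t)) cw). apply dgterm; auto. apply dC; auto.
    + apply (dscal (fun t => gterm As (A t)) dw). apply dgterm; auto. apply dA; auto.
  - unfold F. ring.
Qed.

Lemma V_nonneg t : 0 < t -> 0 <= Vt t.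
Proof.
  intro Ht. destruct (all_positive t Ht) as [p1 [p2 [p3 p4]]]. unfold Vt, Vf.
  generalize (gterm_nonneg Ss (S t) HSs p1) (gterm_nonneg Is (I t) HIs p2)
    (gterm_nonneg Cs (C t) HCs p3) (gterm_nonneg As (A t) HAs p4) cw_pos dw_pos. intros.
  assert (0 <= cw * gterm Cs (C t)) by (apply Rmult_le_pos; lra).
  assert (0 <= dw * gterm As (A t)) by (apply Rmult_le_pos; lra).
  lra.
Qed.

Lemma Vd_terms t : 0 < t ->
  0 <= mu * Ss * ((S t / Ss - 1)^2 / (S t / Ss)) /\
  0 <= omega * Cs * ((C t / Cs - I t / Is)^2 / ((C t / Cs) * (I t / Is))) /\
  0 <= alpha * As * ((A t / As - I t / Is)^2 / ((A t / As) * (I t / Is))) /\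
  Vd t + mu * Ss * ((S t / Ss - 1)^2 / (S t / Ss))
  + omega * Cs * ((C t / Cs - I t / Is)^2 / ((C t / Cs) * (I t / Is)))
  + alpha * As * ((A t / As - I t / Is)^2 / ((A t / As) * (I t / Is))) <= 0.
Proof.
  intro Ht. destruct (all_positive t Ht) as [p1 [p2 [p3 p4]]].
  assert (0 < S t / Ss) by (apply Rdiv_lt_0_compat; auto).
  assert (0 < I t / Is) by (apply Rdiv_lt_0_compat; auto).
  assert (0 < C t / Cs) by (apply Rdiv_lt_0_compat; auto).
  assert (0 < A t / As) by (apply Rdiv_lt_0_compat; auto).
  split; [|split; [|split]].
  - apply Rmult_le_pos; [nra|]. apply Rdiv_le_0_compat; [apply pow2_ge_0|auto].
  - apply Rmult_le_pos; [nra|]. apply Rdiv_le_0_compat; [apply pow2_ge_0|nra].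
  - apply Rmult_le_pos; [nra|]. apply Rdiv_le_0_compat; [apply pow2_ge_0|nra].
  - apply Vdf_bound; auto.
Qed.

Lemma V_mono a b : 0 < a -> a <= b -> Vt b <= Vt a.
Proof.
  intros Ha Hab.
  assert (- Vt a <= - Vt b); [|lra].
  apply (mvt_le (fun t => - Vt t) (fun t => - Vd t)); auto.
  - intros x Hx. eapply dext; [| |apply (dscal Vt (-1)); apply dV; lra]; intros; lra.
  - intros x Hx. destruct (Vd_terms x ltac:(lra)) as [h1 [h2 [h3 h4]]]. lra.
Qed.

Lemma V_cauchy : forall eta, 0 < eta -> exists T, 1 <= T /\ forall t t', T <= t -> T <= t' -> Rabs (Vt t - Vt t') < eta.
Proof.
  apply cauchy_mono.
  - intros t t' Ht Htt. apply V_mono; lra.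
  - intros t Ht. apply V_nonneg; lra.
Qed.

Lemma conv_w (h dh : R -> R) (k P Bh Bd : R) : 0 < k -> 0 < P ->
  (forall t, 0 < t -> is_derive h t (dh t)) ->
  (forall t, 0 < t -> Rabs (h t) <= Bh) ->
  (forall t, 0 < t -> Rabs (dh t) <= Bd) ->
  (forall t, 0 < t -> k * (h t)^2 / P <= - Vd t) ->
  tends h 0.
Proof.
  intros Hk HP Hd HBh HBd Hle.
  assert (HBh0 : 0 <= Bh) by (generalize (HBh 1 ltac:(lra)) (Rabs_pos (h 1)); lra).
  assert (HBd0 : 0 <= Bd) by (generalize (HBd 1 ltac:(lra)) (Rabs_pos (dh 1)); lra).
  assert (Hw := barb Vt Vd (fun t => k * (h t)^2 / P) (fun t => k * (2 * h t * dh t) / P) 1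
     (k * 2 * Bh * Bd / P + 1)).
  apply (tends_sq h 0 (k / P) ltac:(apply Rdiv_lt_0_compat; auto)).
  intros eps He. destruct (Hw ltac:(assert (0 <= k * 2 * Bh * Bd / P) by (apply Rdiv_le_0_compat; [|auto]; repeat apply Rmult_le_pos; lra); lra)) with eps as [T HT]; auto.
  - intros t Ht; apply dV; lra.
  - intros t Ht. eapply dext; [| |apply (dscal (fun t => (h t)^2) (k / P)); apply dsq; apply Hd; lra];
      intros; unfold Rdiv; ring.
  - intros t Ht. unfold Rdiv. rewrite !Rabs_mult. rewrite (Rabs_right k) by lra.
    rewrite (Rabs_right (/ P)) by (apply Rle_ge; apply Rlt_le; apply Rinv_0_lt_compat; auto).
    rewrite (Rabs_right 2) by lra.
    generalize (HBh t ltac:(lra)) (HBd t ltac:(lra)) (Rabs_pos (h t)) (Rabs_pos (dh t)).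
    intros. assert (0 < / P) by (apply Rinv_0_lt_compat; auto).
    assert (Rabs (h t) * Rabs (dh t) <= Bh * Bd) by (apply Rmult_le_compat; auto).
    assert (H9 : k * 2 * / P * (Rabs (h t) * Rabs (dh t)) <= k * 2 * / P * (Bh * Bd)).
    { apply Rmult_le_compat_l; auto. apply Rmult_le_pos; lra. }
    lra.
  - intros t Ht. apply Hle; lra.
  - apply V_cauchy.
  - exists T. intros t Ht. specialize (HT t Ht). replace (k / P * ((h t - 0) * (h t - 0))) with (k * h t ^ 2 / P) by (field; lra). exact HT.
Qed.

Lemma HM : 0 < M.
Proof. unfold M. apply Rdiv_lt_0_compat; auto. Qed.

Lemma tS : tends (fun t => S t - Ss) 0.
Proof.
  apply (conv_w (fun t => S t - Ss) (fun t => Lam - b1 * F t * S t - mu * S t) mu M (M + Ss) K0); auto using HM.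
  - intros t Ht. eapply dext'; [apply dminus; [apply dS; auto|apply dconst]|]. ring.
  - intros t Ht. destruct (bounds t Ht) as [b [_ [_ _]]]. apply Rabs_le. fold M in b. lra.
  - intros t Ht. destruct (bounds t Ht) as [b1' [b2 [b3 b4]]]. fold M in b1', b2, b3, b4. unfold F. apply bS; auto.
  - intros t Ht. destruct (Vd_terms t Ht) as [h1 [h2 [h3 h4]]]. destruct (bounds t Ht) as [b [_ [_ _]]]. fold M in b.
    assert (E : mu * Ss * ((S t / Ss - 1)^2 / (S t / Ss)) = mu * ((S t - Ss)^2 / S t)) by (field; lra).
    assert (mu * (S t - Ss)^2 / M <= mu * ((S t - Ss)^2 / S t)) by (apply inv_bound; try lra; apply pow2_ge_0).
    lra.
Qed.

Lemma tCI : tends (fun t => C t / Cs - I t / Is) 0.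
Proof.
  apply (conv_w (fun t => C t / Cs - I t / Is)
    (fun t => (phi * I t - (omega + mu) * C t) / Cs - (b1 * F t * S t - (rho + phi + mu) * I t + alpha * A t + omega * C t) / Is)
    (omega * Cs) (M * M / (Cs * Is)) (M / Cs + M / Is) (K0 / Cs + K0 / Is)).
  - nra.
  - generalize HM; intro. apply Rdiv_lt_0_compat; nra.
  - intros t Ht. eapply dext; [| |apply dminus; [apply (dscal C (/ Cs)); apply dC; auto|apply (dscal I (/ Is)); apply dI; auto]];
      intros; unfold Rdiv; ring.
  - intros t Ht. destruct (bounds t Ht) as [b1' [b2 [b3 b4]]]. fold M in b1', b2, b3, b4.
    apply abs_diff_div; auto; apply Rabs_le; lra.
  - intros t Ht. destruct (bounds t Ht) as [b1' [b2 [b3 b4]]]. fold M in b1', b2, b3, b4.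
    apply abs_diff_div; auto. apply bC; auto. unfold F. apply bI; auto.
  - intros t Ht. destruct (Vd_terms t Ht) as [h1 [h2 [h3 h4]]]. destruct (bounds t Ht) as [b1' [b2 [b3 b4]]]. fold M in b1', b2, b3, b4.
    assert (omega * Cs * (C t / Cs - I t / Is) ^ 2 / (M * M / (Cs * Is)) <=
            omega * Cs * ((C t / Cs - I t / Is)^2 / ((C t / Cs) * (I t / Is)))); [|lra].
    apply inv_bound.
    + nra.
    + apply pow2_ge_0.
    + apply Rmult_lt_0_compat; apply Rdiv_lt_0_compat; lra.
    + replace (M * M / (Cs * Is)) with ((M / Cs) * (M / Is)) by (field; lra).
      apply Rmult_le_compat; try (apply Rlt_le; apply Rdiv_lt_0_compat; lra);
        unfold Rdiv; apply Rmult_le_compat_r; try lra; apply Rlt_le, Rinv_0_lt_compat; lra.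
Qed.

Lemma tAI : tends (fun t => A t / As - I t / Is) 0.
Proof.
  apply (conv_w (fun t => A t / As - I t / Is)
    (fun t => (rho * I t - (alpha + mu) * A t) / As - (b1 * F t * S t - (rho + phi + mu) * I t + alpha * A t + omega * C t) / Is)
    (alpha * As) (M * M / (As * Is)) (M / As + M / Is) (K0 / As + K0 / Is)).
  - nra.
  - generalize HM; intro. apply Rdiv_lt_0_compat; nra.
  - intros t Ht. eapply dext; [| |apply dminus; [apply (dscal A (/ As)); apply dA; auto|apply (dscal I (/ Is)); apply dI; auto]];
      intros; unfold Rdiv; ring.
  - intros t Ht. destruct (bounds t Ht) as [b1' [b2 [b3 b4]]]. fold M in b1', b2, b3, b4.
    apply abs_diff_div; auto; apply Rabs_le; lra.
  - intros t Ht. destruct (bounds t Ht) as [b1' [b2 [b3 b4]]]. fold M in b1', b2, b3, b4.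
    apply abs_diff_div; auto. apply bA; auto. unfold F. apply bI; auto.
  - intros t Ht. destruct (Vd_terms t Ht) as [h1 [h2 [h3 h4]]]. destruct (bounds t Ht) as [b1' [b2 [b3 b4]]]. fold M in b1', b2, b3, b4.
    assert (alpha * As * (A t / As - I t / Is) ^ 2 / (M * M / (As * Is)) <=
            alpha * As * ((A t / As - I t / Is)^2 / ((A t / As) * (I t / Is)))); [|lra].
    apply inv_bound.
    + nra.
    + apply pow2_ge_0.
    + apply Rmult_lt_0_compat; apply Rdiv_lt_0_compat; lra.
    + replace (M * M / (As * Is)) with ((M / As) * (M / Is)) by (field; lra).
      apply Rmult_le_compat; try (apply Rlt_le; apply Rdiv_lt_0_compat; lra);
        unfold Rdiv; apply Rmult_le_compat_r; try lra; apply Rlt_le, Rinv_0_lt_compat; lra.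
Qed.

Lemma tN : tends (fun t => N t - Lam / mu) 0.
Proof.
  intros eps He. destruct H0 as [h1 [h2 [h3 [h4 h5]]]].
  set (c0 := N 0 - Lam / mu).
  assert (Hc0 : Rabs c0 <= Lam / mu).
  { unfold c0, N. generalize HM; unfold M; intro. apply Rabs_le. split; lra. }
  exists (Rmax 1 (Lam / mu / (mu * eps)) + 1). intros t Ht.
  generalize (Rmax_l 1 (Lam / mu / (mu * eps))) (Rmax_r 1 (Lam / mu / (mu * eps))). intros r1 r2.
  assert (Htp : 0 < t) by lra.
  generalize (hN t Htp). fold c0. intro E.
  assert (Hex : 1 + mu * t <= exp (mu * t)) by apply exp_ineq1_le.
  assert (Hexp : 0 < exp (mu * t)) by apply exp_pos.
  replace (N t - Lam / mu - 0) with (c0 / exp (mu * t)) by (rewrite <- E; field; lra).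
  unfold Rdiv. rewrite Rabs_mult, Rabs_inv, (Rabs_right (exp (mu * t))) by lra.
  assert (Lam / mu / (mu * eps) * (mu * eps) = Lam / mu) by (field; lra).
  assert (0 < mu * eps * (t - Lam / mu / (mu * eps))) by (apply Rmult_lt_0_compat; [nra|lra]).
  assert (Lam / mu < mu * t * eps) by nra.
  apply (Rmult_lt_reg_r (exp (mu * t))); auto. rewrite Rmult_assoc, Rinv_l by lra. nra.
Qed.

Lemma attract : is_lim S p_infty Ss /\ is_lim I p_infty Is /\ is_lim C p_infty Cs /\ is_lim A p_infty As.
Proof.
  assert (HR : 0 < Is + Cs + As) by lra.
  assert (TS : tends S Ss).
  { eapply (tends_lin' (fun t => S t - Ss) (fun _ => 1) S 1 Ss 0 1); [apply tS|apply tends_const| |ring].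
    exists 0; intros; ring. }
  assert (X1 : tends (fun t => (N t - Lam / mu) - (S t - Ss)) 0).
  { eapply (tends_lin' (fun t => N t - Lam / mu) (fun t => S t - Ss) _ 1 (-1) 0 0); [apply tN|apply tS| |ring].
    exists 0; intros; ring. }
  assert (X2 : tends (fun t => ((N t - Lam / mu) - (S t - Ss)) - Cs * (C t / Cs - I t / Is)) 0).
  { eapply (tends_lin' _ (fun t => C t / Cs - I t / Is) _ 1 (- Cs) 0 0); [apply X1|apply tCI| |ring].
    exists 0; intros; ring. }
  assert (X3 : tends (fun t => ((N t - Lam / mu) - (S t - Ss)) - Cs * (C t / Cs - I t / Is) - As * (A t / As - I t / Is)) 0).
  { eapply (tends_lin' _ (fun t => A t / As - I t / Is) _ 1 (- As) 0 0); [apply X2|apply tAI| |ring].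
    exists 0; intros; ring. }
  assert (TI : tends I Is).
  { eapply (tends_lin' _ (fun _ => 1) _ (Is / (Is + Cs + As)) Is 0 1); [apply X3|apply tends_const| |ring].
    exists 0; intros t Ht. generalize sum_eq; intro Es. unfold N.
    replace (Lam / mu) with (Ss + Is + Cs + As) by exact Es. field. repeat split; lra. }
  assert (TC : tends C Cs).
  { eapply (tends_lin' (fun t => C t / Cs - I t / Is) I _ Cs (Cs / Is) 0 Is); [apply tCI|apply TI| |field; lra].
    exists 0; intros t Ht. field. split; lra. }
  assert (TA : tends A As).
  { eapply (tends_lin' (fun t => A t / As - I t / Is) I _ As (As / Is) 0 Is); [apply tAI|apply TI| |field; lra].
    exists 0; intros t Ht. field. split; lra. }
  repeat split; apply tends_is_lim; auto.
Qed.

Lemma V_le0 : 0 < S 0 -> 0 < I 0 -> 0 < C 0 -> 0 < A 0 -> forall t, 0 < t -> Vt t <= Vt 0.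
Proof.
  intros p1 p2 p3 p4 t Ht.
  assert (Hc : filterlim Vt (at_right 0) (locally (Vt 0))).
  { unfold Vt, Vf. apply rc_plus; [apply rc_plus; [apply rc_plus|]|].
    - apply rc_gterm; auto using rcS.
    - apply rc_gterm; auto using rcI.
    - apply rc_mult; [apply rc_const|]. apply rc_gterm; auto using rcC.
    - apply rc_mult; [apply rc_const|]. apply rc_gterm; auto using rcA. }
  assert (H : (fun t => - Vt t) 0 <= (fun t => - Vt t) t).
  { apply (mono0 (fun t => - Vt t)); auto.
    - apply (filterlim_ext (fun t => -1 * Vt t)); [intro; ring|].
      replace (- Vt 0) with (-1 * Vt 0) by ring. apply rc_mult; auto using rc_const.
    - intros a b Ha Hab. generalize (V_mono a b Ha ltac:(lra)). lra. }
  simpl in H. lra.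
Qed.

Lemma Vt_terms t : 0 < t ->
  gterm Ss (S t) <= Vt t /\ gterm Is (I t) <= Vt t /\ cw * gterm Cs (C t) <= Vt t /\ dw * gterm As (A t) <= Vt t.
Proof.
  intro Ht. destruct (all_positive t Ht) as [p1 [p2 [p3 p4]]]. unfold Vt, Vf.
  generalize (gterm_nonneg Ss (S t) HSs p1) (gterm_nonneg Is (I t) HIs p2)
    (gterm_nonneg Cs (C t) HCs p3) (gterm_nonneg As (A t) HAs p4) cw_pos dw_pos. intros.
  assert (0 <= cw * gterm Cs (C t)) by (apply Rmult_le_pos; lra).
  assert (0 <= dw * gterm As (A t)) by (apply Rmult_le_pos; lra).
  lra.
Qed.

End Sol.
Lemma stability : forall eps, 0 < eps -> exists delta, 0 < delta /\
     forall S I C A : R -> R,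
       is_solution Lam mu beta rho phi alpha omega etaC etaA S I C A ->
       in_Omega Lam mu (S 0) (I 0) (C 0) (A 0) ->
       ~ in_Omega0 Lam mu (S 0) (I 0) (C 0) (A 0) ->
       dist4 (S 0) (I 0) (C 0) (A 0) Ss Is Cs As < delta ->
       forall t, 0 <= t -> dist4 (S t) (I t) (C t) (A t) Ss Is Cs As < eps.
Proof.
  intros eps He.
  generalize cw_pos dw_pos; intros Hcw Hdw.
  destruct (comp_lower Ss 1 eps HSs ltac:(lra) He) as [e1 [He1 L1]].
  destruct (comp_lower Is 1 eps HIs ltac:(lra) He) as [e2 [He2 L2]].
  destruct (comp_lower Cs cw eps HCs Hcw He) as [e3 [He3 L3]].
  destruct (comp_lower As dw eps HAs Hdw He) as [e4 [He4 L4]].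
  set (eta := Rmin (Rmin e1 e2) (Rmin e3 e4)).
  assert (Heta : 0 < eta) by (unfold eta; repeat apply Rmin_glb_lt; auto).
  generalize (Rmin_l (Rmin e1 e2) (Rmin e3 e4)) (Rmin_r (Rmin e1 e2) (Rmin e3 e4))
      (Rmin_l e1 e2) (Rmin_r e1 e2) (Rmin_l e3 e4) (Rmin_r e3 e4); fold eta; intros m1 m2 m3 m4 m5 m6.
  destruct (comp_upper Ss 1 (eta / 4) HSs ltac:(lra) ltac:(lra)) as [d1 [Hd1 U1]].
  destruct (comp_upper Is 1 (eta / 4) HIs ltac:(lra) ltac:(lra)) as [d2 [Hd2 U2]].
  destruct (comp_upper Cs cw (eta / 4) HCs Hcw ltac:(lra)) as [d3 [Hd3 U3]].
  destruct (comp_upper As dw (eta / 4) HAs Hdw ltac:(lra)) as [d4 [Hd4 U4]].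
  set (delta := Rmin eps (Rmin (Rmin d1 d2) (Rmin d3 d4))).
  assert (Hdel : 0 < delta) by (unfold delta; repeat apply Rmin_glb_lt; auto).
  generalize (Rmin_l eps (Rmin (Rmin d1 d2) (Rmin d3 d4))) (Rmin_r eps (Rmin (Rmin d1 d2) (Rmin d3 d4)))
    (Rmin_l (Rmin d1 d2) (Rmin d3 d4)) (Rmin_r (Rmin d1 d2) (Rmin d3 d4))
      (Rmin_l d1 d2) (Rmin_r d1 d2) (Rmin_l d3 d4) (Rmin_r d3 d4); fold delta; intros n1 n2 n3 n4 n5 n6 n7 n8.
  exists delta. split; auto.
  intros S I C A Hsol H0 Hn0 Hd t Ht.
  destruct (Rle_lt_or_eq_dec 0 t Ht) as [Htp|Ht0]; [|subst t; lra].
  destruct (dist_comp (S 0) (I 0) (C 0) (A 0) Ss Is Cs As) as [c1 [c2 [c3 c4]]].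
  destruct (U1 (S 0) ltac:(lra)) as [p1 v1].
  destruct (U2 (I 0) ltac:(lra)) as [p2 v2].
  destruct (U3 (C 0) ltac:(lra)) as [p3 v3].
  destruct (U4 (A 0) ltac:(lra)) as [p4 v4].
  assert (HV0 : Vf (S 0) (I 0) (C 0) (A 0) < eta) by (unfold Vf; lra).
  generalize (V_le0 S I C A Hsol H0 Hn0 p1 p2 p3 p4 t Htp). intro HVt.
  destruct (Vt_terms S I C A Hsol H0 Hn0 t Htp) as [t1 [t2 [t3 t4]]].
  destruct (all_positive S I C A Hsol H0 Hn0 t Htp) as [q1 [q2 [q3 q4]]].
  apply dist_small; auto.
  - apply L1; auto. lra.
  - apply L2; auto. lra.
  - apply L3; auto. lra.
  - apply L4; auto. lra.
Qed.

End Model.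


Theorem mainTheorem1 (Lam mu beta rho phi alpha omega etaC etaA : R)
  (HLam : 0 < Lam) (Hmu : 0 < mu) (Hbeta : 0 < beta) (Hrho : 0 < rho)
  (Hphi : 0 < phi) (Halpha : 0 < alpha) (Homega : 0 < omega)
  (HetaC0 : 0 < etaC) (HetaC1 : etaC <= 1) (HetaA : 1 <= etaA)
  (HR0 : R0t mu beta rho phi alpha omega etaC etaA > 1) :
  let Ss := Sstar Lam mu beta rho phi alpha omega etaC etaA in
  let Is := Istar Lam mu beta rho phi alpha omega etaC etaA in
  let Cs := Cstar Lam mu beta rho phi alpha omega etaC etaA in
  let As := Astar Lam mu beta rho phi alpha omega etaC etaA in
  (* Lyapunov stability relative to Omega \ Omega_0 *)
  (forall eps, 0 < eps -> exists delta, 0 < delta /\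
     forall S I C A : R -> R,
       is_solution Lam mu beta rho phi alpha omega etaC etaA S I C A ->
       in_Omega Lam mu (S 0) (I 0) (C 0) (A 0) ->
       ~ in_Omega0 Lam mu (S 0) (I 0) (C 0) (A 0) ->
       dist4 (S 0) (I 0) (C 0) (A 0) Ss Is Cs As < delta ->
       forall t, 0 <= t -> dist4 (S t) (I t) (C t) (A t) Ss Is Cs As < eps) /\
  (* global attractivity on Omega \ Omega_0 *)
  (forall S I C A : R -> R,
     is_solution Lam mu beta rho phi alpha omega etaC etaA S I C A ->
     in_Omega Lam mu (S 0) (I 0) (C 0) (A 0) ->
     ~ in_Omega0 Lam mu (S 0) (I 0) (C 0) (A 0) ->
     is_lim S p_infty Ss /\ is_lim I p_infty Is /\
     is_lim C p_infty Cs /\ is_lim A p_infty As).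
Proof.
  intros Ss Is Cs As.
  assert (HetaA0 : 0 < etaA) by lra.
  set (r := R0t mu beta rho phi alpha omega etaC etaA) in *.
  set (x1 := xi1 mu alpha). set (x2 := xi2 mu omega).
  assert (Hx1 : 0 < x1) by (unfold x1, xi1; lra).
  assert (Hx2 : 0 < x2) by (unfold x2, xi2; lra).
  set (D := Dden mu rho phi alpha omega).
  assert (HD : 0 < D).
  { unfold D, Dden; fold x1 x2. assert (0 < x2*(rho+x1)) by (apply Rmult_lt_0_compat; lra).
    assert (0 < phi*x1) by (apply Rmult_lt_0_compat; lra). apply Rmult_lt_0_compat; lra. }
  set (Num := x2 * (x1 + rho * etaA) + etaC * phi * x1).
  assert (HNum : 0 < Num).
  { unfold Num. assert (0 < x2*(x1+rho*etaA)) by (apply Rmult_lt_0_compat; nra).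
    assert (0 < etaC*phi*x1) by (repeat apply Rmult_lt_0_compat; lra). lra. }
  assert (Er : r = beta * Num / D) by (unfold r, R0t, D, Dden, Num; fold x1 x2; reflexivity).
  assert (Eb : beta = r * D / Num) by (rewrite Er; field; lra).
  assert (Hr1 : 0 < 1 - 1 / r).
  { assert (1 / r < 1); [|lra]. apply (Rmult_lt_reg_r r); [lra|].
    replace (1 / r * r) with 1 by (field; lra). lra. }
  assert (ESs : Ss = Lam / (mu * r)) by reflexivity.
  assert (EIs : Is = Lam * x1 * x2 * (1 - 1 / r) / D) by reflexivity.
  assert (ECs : Cs = Lam * phi * x1 * (1 - 1 / r) / D) by reflexivity.
  assert (EAs : As = Lam * rho * x2 * (1 - 1 / r) / D) by reflexivity.
  assert (HSs : 0 < Ss) by (rewrite ESs; apply Rdiv_lt_0_compat; nra).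
  assert (HIs : 0 < Is).
  { rewrite EIs. apply Rdiv_lt_0_compat; auto. repeat apply Rmult_lt_0_compat; auto. }
  assert (HCs : 0 < Cs).
  { rewrite ECs. apply Rdiv_lt_0_compat; auto. repeat apply Rmult_lt_0_compat; auto. }
  assert (HAs : 0 < As).
  { rewrite EAs. apply Rdiv_lt_0_compat; auto. repeat apply Rmult_lt_0_compat; auto. }
  assert (Ephi : phi = (omega + mu) * Cs / Is).
  { rewrite ECs, EIs. fold x2. unfold x2, xi2. field. unfold x1, xi1 in *. repeat split; lra. }
  assert (Erho : rho = (alpha + mu) * As / Is).
  { rewrite EAs, EIs. fold x1. unfold x1, xi1. field. unfold x2, xi2 in *. repeat split; lra. }
  assert (EDn : D = mu * (x2 * (rho + x1) + phi * x1)) by reflexivity.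
  assert (Eb1 : beta1 Lam mu beta = mu * (Is + Cs + As) / ((Is + etaC * Cs + etaA * As) * Ss)).
  { unfold beta1. rewrite Eb, ESs, EIs, ECs, EAs. unfold Num. rewrite EDn.
    assert (0 < x2 * (rho + x1) + phi * x1) by (assert (0 < x2*(rho+x1)) by (apply Rmult_lt_0_compat; lra);
      assert (0 < phi*x1) by (apply Rmult_lt_0_compat; lra); lra).
    assert (0 < Lam * x1 * x2 * (r - 1) + etaC * (Lam * phi * x1 * (r - 1)) + etaA * (Lam * rho * x2 * (r - 1))).
    { assert (0 < Lam * x1 * x2 * (r - 1)) by (repeat apply Rmult_lt_0_compat; lra).
      assert (0 < etaC * (Lam * phi * x1 * (r - 1))) by (repeat apply Rmult_lt_0_compat; lra).
      assert (0 < etaA * (Lam * rho * x2 * (r - 1))) by (repeat apply Rmult_lt_0_compat; lra). lra. }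
    assert (0 < x2 * (x1 + rho * etaA) + etaC * phi * x1) by exact HNum.
    field. repeat split; lra. }
  assert (EL : Lam = beta1 Lam mu beta * (Is + etaC * Cs + etaA * As) * Ss + mu * Ss).
  { assert (HF : 0 < Is + etaC * Cs + etaA * As) by nra.
    assert (E : beta1 Lam mu beta * (Is + etaC * Cs + etaA * As) * Ss = mu * (Is + Cs + As)).
    { rewrite Eb1. field. split; lra. }
    rewrite E.
    assert (E2 : Is + Cs + As + Ss = Lam / mu).
    { rewrite ESs, EIs, ECs, EAs, EDn.
      assert (0 < x2 * (rho + x1) + phi * x1) by (assert (0 < x2*(rho+x1)) by (apply Rmult_lt_0_compat; lra);
        assert (0 < phi*x1) by (apply Rmult_lt_0_compat; lra); lra).
      field. repeat split; lra. }
    assert (mu * (Is + Cs + As) + mu * Ss = mu * (Is + Cs + As + Ss)) by ring.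
    rewrite H, E2. field. lra. }
  split.
  - apply (stability Lam mu beta rho phi alpha omega etaC etaA HLam Hmu Hbeta Hrho Hphi Halpha Homega HetaC0 HetaA0
           Ss Is Cs As HSs HIs HCs HAs EL Ephi Erho Eb1).
  - intros S I C A Hsol H0 Hn0.
    apply (attract Lam mu beta rho phi alpha omega etaC etaA HLam Hmu Hbeta Hrho Hphi Halpha Homega HetaC0 HetaA0
           Ss Is Cs As HSs HIs HCs HAs EL Ephi Erho Eb1 S I C A Hsol H0 Hn0).
Qed.
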